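(* Let $q$ be a prime power with $q\equiv 1\pmod 3$. The connected components of $C_A(q)$ are as follows: (a) there are exactly $q-1$ isolated vertices, namely the $\pi\in AGL(1,q)$ with $\pi(F)=F$ (and a vertex is isolated iff $\pi(F)=F$); (b) if $q$ is odd, every component that is not an isolated vertex is a cycle of length $6$; (c) if $q$ is even, every component that is not an isolated vertex is a cycle of length $3$.
   Context: $AGL(1,q)=\{x\mapsto ax+b: a\in GF(q)\setminus\{0\}, b\in GF(q)\}$, acting on $GF(q)$. For permutations $\pi,\sigma$ of a finite set, $hd(\pi,\sigma)$ is the number of points at which they differ. Fix a distinguished element $F\in GF(q)$. For a permutation $\pi$ of $GF(q)$, $\pi^{\triangle}$ is the permutation with $\pi^{\triangle}(\pi^{-1}(F))=\pi(F)$, $\pi^{\triangle}(F)=F$, and $\pi^{\triangle}(x)=\pi(x)$ otherwise. The contraction graph $C_A(q)$ has vertex set $AGL(1,q)$, with distinct $\pi,\sigma$ adjacent iff $hd(\pi^{\triangle},\sigma^{\triangle})=q-4$. *)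

(* Defs.v *)
From HB Require Import structures.
From mathcomp Require Import all_boot all_order all_algebra all_fingroup all_field.
Set Implicit Arguments. Unset Strict Implicit. Unset Printing Implicit Defensive.
Import GRing.Theory.
Local Open Scope ring_scope.

Section Defs.
Variable F : finFieldType.

Definition AGL : {set {perm F}} :=
  [set p : {perm F} | [exists a : F, exists b : F,
      (a != 0) && [forall x : F, p x == a * x + b]]].

Definition hd (f g : F -> F) : nat := #|[set x : F | f x != g x]|.

Definition tri (Fd : F) (p : {perm F}) (x : F) : F :=
  if x == Fd then Fd
  else if x == (p^-1)%g Fd then p Fd
  else p x.

Definition cadj (Fd : F) : rel {perm F} := fun p s =>
  [&& p \in AGL, s \in AGL, p != s &
      hd (tri Fd p) (tri Fd s) == (#|F| - 4)%N].

Definition isolated (Fd : F) (p : {perm F}) : bool :=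
  [forall s : {perm F}, ~~ cadj Fd p s].

Definition component (Fd : F) (p : {perm F}) : {set {perm F}} :=
  [set s | connect (cadj Fd) p s].
End Defs.

Definition is_cycle_graph (T : finType) (e : rel T) (C : {set T}) (n : nat) : Prop :=
  exists s : seq T, [/\ uniq s, size s = n, C = [set x in s] &
    {in C &, forall x y, e x y = (y == next s x) || (x == next s y)}].

(* Main.v *)
Require Import Defs.
From HB Require Import structures.
From mathcomp Require Import all_boot all_order all_algebra all_fingroup all_field all_solvable.
From mathcomp Require Import ring zify.
Set Implicit Arguments. Unset Strict Implicit. Unset Printing Implicit Defensive.
Import GRing.Theory.

Section Basic.
Variable F : finFieldType.
Variable Fd : F.
Local Open Scope ring_scope.

Lemma AGLP (p : {perm F}) :
  reflect (exists a b, a != 0 /\ forall x, p x = a * x + b) (p \in AGL F).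
Proof.
rewrite inE; apply: (iffP existsP) => [[a /existsP[b /andP[a0 /forallP h]]]|[a [b [a0 h]]]].
  by exists a, b; split => // x; apply/eqP.
by exists a; apply/existsP; exists b; rewrite a0; apply/forallP => x; rewrite h.
Qed.

Lemma AGL_rep (p : {perm F}) : p \in AGL F ->
  exists2 a, a != 0 & forall x, p x = a * (x - (p^-1)%g Fd) + Fd.
Proof.
move/AGLP=> [a [b [a0 h]]]; exists a => // x.
have hP := h ((p^-1)%g Fd); rewrite permKV in hP.
rewrite h; set P := (p^-1)%g Fd in hP *; rewrite hP; ring.
Qed.

Lemma AGL_eq (p s : {perm F}) x y : p \in AGL F -> s \in AGL F -> x != y ->
  p x = s x -> p y = s y -> p = s.
Proof.
move=> /AGLP[a [b [a0 hp]]] /AGLP[a' [b' [a0' hs]]] xy.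
rewrite hp hs => ex; rewrite hp hs => ey.
have e : (a - a') * (x - y) = (a*x+b - (a'*x+b')) - (a*y+b - (a'*y+b')) by ring.
rewrite ex ey !subrr ?subr0 in e.
move/eqP: e; rewrite mulf_eq0 !subr_eq0 (negbTE xy) orbF => /eqP aa.
rewrite aa in ex; move/addrI: ex => bb.
by apply/permP => z; rewrite hp hs aa bb.
Qed.

Lemma tri_E (p : {perm F}) x :
  tri Fd p x = if x == Fd then Fd else if p x == Fd then p Fd else p x.
Proof.
rewrite /tri; have -> : (x == (p^-1)%g Fd) = (p x == Fd); last by [].
by apply/eqP/eqP => [->|<-]; rewrite ?permKV ?permK.
Qed.

Lemma hd_sym (f g : F -> F) : hd f g = hd g f.
Proof. by rewrite /hd; apply: eq_card => x; rewrite !inE eq_sym. Qed.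

Lemma cadj_sym p s : cadj Fd p s = cadj Fd s p.
Proof. by rewrite /cadj hd_sym eq_sym; case: (p \in AGL F); case: (s \in AGL F). Qed.

Lemma hd_card (f g : F -> F) :
  (hd f g + #|[set x | f x == g x]|)%N = #|F|.
Proof.
rewrite /hd addnC -(cardsC [set x | f x == g x]); congr (_ + _).
by apply: eq_card => x; rewrite !inE.
Qed.

End Basic.

Section Root.
Variable F : finFieldType.
Variable Fd : F.
Variable r : F.
Local Open Scope ring_scope.
Hypothesis hr : r ^+ 2 - r + 1 = 0.
Hypothesis hr1 : r + 1 != 0.

Lemma r0 : r != 0.
Proof. by apply/eqP => h; move: hr; rewrite h expr0n /= subr0 add0r => /eqP; rewrite oner_eq0. Qed.

Lemma r_ne1 : r != 1.
Proof. by apply/eqP => h; move: hr; rewrite h expr1n subrr add0r => /eqP; rewrite oner_eq0. Qed.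

Lemma r2 : r ^+ 2 = r - 1.
Proof. by apply/eqP; rewrite -subr_eq0 -hr; apply/eqP; ring. Qed.

Lemma r3 : r ^+ 3 = -1.
Proof.
have -> : r ^+ 3 = r * r ^+ 2 by ring.
by rewrite r2; apply/eqP; rewrite -subr_eq0 -hr; apply/eqP; ring.
Qed.

Lemma r6 : r ^+ 6 = 1.
Proof. have -> : r ^+ 6 = r ^+ 3 * r ^+ 3 by ring. by rewrite r3; ring. Qed.

Definition dil (c x : F) := c * (x - Fd) + Fd.

Lemma dil_inj c : c != 0 -> injective (dil c).
Proof. by move=> c0 x y /addIr /(mulfI c0) /addIr. Qed.

Lemma dil_dil c d x : dil c (dil d x) = dil (c * d) x.
Proof. by rewrite /dil; ring. Qed.

Lemma dil1 x : dil 1 x = x.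
Proof. by rewrite /dil; ring. Qed.

Lemma dilFd c : dil c Fd = Fd.
Proof. by rewrite /dil subrr mulr0 add0r. Qed.

Definition dp : {perm F} := perm (dil_inj r0).

Lemma dpE x : dp x = dil r x.
Proof. by rewrite permE. Qed.

Definition f (z : {perm F}) : {perm F} := (dp * z * dp)%g.

Lemma fE (z : {perm F}) x : f z x = dil r (z (dil r x)).
Proof. by rewrite /f !permM !dpE. Qed.

Lemma iterfE k (z : {perm F}) x : iter k f z x = dil (r ^+ k) (z (dil (r ^+ k) x)).
Proof.
elim: k x => [|k IH] x; first by rewrite /= !expr0 !dil1.
by rewrite iterS fE IH !dil_dil exprS [r ^+ k * r]mulrC.
Qed.

Lemma iterf_n n (z : {perm F}) : r ^+ n = 1 -> iter n f z = z.
Proof. by move=> h; apply/permP => x; rewrite iterfE h !dil1. Qed.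

Lemma f_AGL (z : {perm F}) : z \in AGL F -> f z \in AGL F.
Proof.
move/AGLP=> [a [b [a0 h]]]; apply/AGLP.
exists (r * a * r), (r * (a * (Fd - r * Fd) + b - Fd) + Fd); split.
  by rewrite !mulf_neq0 // r0.
by move=> x; rewrite fE h /dil; ring.
Qed.

Lemma iterf_AGL k (z : {perm F}) : z \in AGL F -> iter k f z \in AGL F.
Proof. by move=> h; elim: k => // k IH; rewrite iterS f_AGL. Qed.

Lemma iterf_Fd k (z : {perm F}) : iter k f z Fd = dil (r ^+ k) (z Fd).
Proof. by rewrite iterfE dilFd. Qed.

Lemma iterf_nfix k (z : {perm F}) : z Fd != Fd -> iter k f z Fd != Fd.
Proof.
move=> h; rewrite iterf_Fd; apply: contra h => /eqP e.
by apply/eqP; apply: (dil_inj (expf_neq0 k r0)); rewrite e dilFd.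
Qed.

Lemma fchar (p s : {perm F}) a u :
  (forall x, p x = a * (x - (r * u + Fd)) + Fd) ->
  (forall x, s x = a * r ^+ 2 * (x - (u + Fd)) + Fd) -> s = f p.
Proof.
move=> hp hs; apply/permP => x; rewrite fE hp hs /dil; ring.
Qed.


Lemma eq_div (c X u : F) : c != 0 -> (X == u / c) = (c * X == u).
Proof.
move=> c0; apply/eqP/eqP => [->|<-]; first by rewrite mulrC divfK.
by rewrite [c * X]mulrC mulfK.
Qed.

Lemma addFd_eq (X Y : F) : (X + Fd == Y + Fd) = (X == Y).
Proof. exact: (inj_eq (addIr Fd)). Qed.

Lemma addFd_eqFd (X : F) : (X + Fd == Fd) = (X == 0).
Proof. by rewrite -{2}[Fd]add0r addFd_eq. Qed.

Lemma r1_ne0 : 1 + r != 0.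
Proof. by rewrite addrC. Qed.

Lemma D2 (p : {perm F}) : p \in AGL F -> p Fd != Fd -> cadj Fd p (f p).
Proof.
move=> pA pF.
have [a a0 hp] := AGL_rep Fd pA.
set P := (p^-1)%g Fd in hp.
set u := P - Fd.
have PE : P = u + Fd by rewrite /u subrK.
have u0 : u != 0.
  apply: contra pF => /eqP u0; have : p P = Fd by rewrite permKV.
  by rewrite PE u0 add0r => ->.
have hpX X : p (X + Fd) = a * (X - u) + Fd by rewrite hp PE; ring.
have hsX X : f p (X + Fd) = r * a * (r * X - u) + Fd by rewrite fE hp PE /dil; ring.
have pFd : p Fd = a * (0 - u) + Fd by rewrite -hpX add0r.
have sFd : f p Fd = r * a * (r * 0 - u) + Fd by rewrite -hsX add0r.
have ur : (u == u / r) = false.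
  rewrite eq_div ?r0 //; apply/negbTE; apply: contra r_ne1 => /eqP h.
  by apply/eqP; apply: (mulIf u0); rewrite mul1r.
have claim X : (tri Fd p (X + Fd) == tri Fd (f p) (X + Fd)) =
               (X \in [:: 0; u; u / r; u / (1 + r)]).
  rewrite !tri_E hpX hsX pFd sFd !addFd_eqFd !inE.
  case: (eqVneq X 0) => [->|X0]; first by rewrite eqxx.
  Show.
  rewrite mulf_eq0 (negbTE a0) /= subr_eq0 !mulf_eq0 (negbTE a0) (negbTE r0) /=.
  rewrite subr_eq0 -eq_div ?r0 //.
  case: (eqVneq X u) => [->|Xu]; first rewrite ur /= addFd_eq.
    have : r * a * (r * u - u) - a * (0 - u) = a * u * (r ^+ 2 - r + 1) by ring.
    by rewrite hr mulr0 => /eqP; rewrite subr_eq0 eq_sym.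
  case: (eqVneq X (u / r)) => [->|Xur] /=.
    rewrite addFd_eq; apply/eqP; apply/eqP; rewrite -subr_eq0.
    have -> : a * (u / r - u) - r * a * (r * 0 - u) = a * u / r * (r ^+ 2 - r + 1).
      by field; rewrite r0.
    by rewrite hr mulr0.
  rewrite addFd_eq.
  have -> : (a * (X - u) == r * a * (r * X - u)) = ((1 + r) * X == u).
    rewrite -subr_eq0 -[in RHS]subr_eq0.
    have -> : a * (X - u) - r * a * (r * X - u) = a * (1 - r) * ((1 + r) * X - u) by ring.
    have r1 : (1 - r == 0) = false by rewrite subr_eq0 eq_sym; exact: negbTE r_ne1.
    by rewrite !mulf_eq0 (negbTE a0) r1.
  by rewrite eq_div ?r1_ne0.
rewrite /cadj pA f_AGL //=; apply/andP; split.
  apply/eqP => e; have := congr1 (fun z : {perm F} => z Fd) e; rewrite /= pFd sFd => /addIr e'.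
  have : a * u * (1 - r) = r * a * (r * 0 - u) - a * (0 - u) by ring.
  rewrite -e' subrr => /eqP; rewrite !mulf_eq0 (negbTE a0) (negbTE u0) /= subr_eq0.
  by rewrite eq_sym (negbTE r_ne1).
set l := [:: 0; u; u / r; u / (1 + r)].
have ul : uniq l.
  rewrite /l /= !inE !negb_or eq_sym u0 ur /= !andbT.
  rewrite !(eq_sym 0) !mulf_eq0 (negbTE u0) !invr_eq0 (negbTE r0) (negbTE r1_ne0) /=.
  rewrite eq_div ?r1_ne0 //; apply/andP; split.
    apply: contra r0 => /eqP h; apply/eqP; apply: (mulIf u0).
    have e : (1 + r) * u - u = r * u by ring.
    by rewrite h subrr in e; rewrite -e mul0r.
  rewrite eq_div ?r1_ne0 // -subr_eq0.
  have -> : (1 + r) * (u / r) - u = u / r by field; rewrite r0.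
  by rewrite mulf_eq0 invr_eq0 (negbTE u0) (negbTE r0).
have hA : #|[set x | tri Fd p x == tri Fd (f p) x]| = 4%N.
  have um : uniq [seq X + Fd | X <- l] by rewrite (map_inj_uniq (addIr Fd)).
  rewrite -[4%N]/(size l) -(size_map (fun X => X + Fd)) -(card_uniqP um).
  apply: eq_card => x; rewrite inE -(subrK Fd x) claim.
  by rewrite (mem_map (addIr Fd)).
by rewrite -(hd_card (tri Fd p) (tri Fd (f p))) hA addnK.
Qed.


Hypothesis hq4 : (4 <= #|F|)%N.

Lemma D1 (p s : {perm F}) : cadj Fd p s -> p Fd != Fd /\ (s = f p \/ p = f s).
Proof.
rewrite /cadj => /and4P[pA sA ps /eqP hd4].
set A := [set x | tri Fd p x == tri Fd s x].
have hA : #|A| = 4%N.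
  have := hd_card (tri Fd p) (tri Fd s); rewrite hd4 -/A.
  have : (#|A| <= #|F|)%N by apply: max_card.
  lia.
set P := (p^-1)%g Fd. set P' := (s^-1)%g Fd.
set S := [set x in [:: Fd; P; P']].
have hB : (#|A :\: S| <= 1)%N.
  rewrite leqNgt; apply/negP => /card_gt1P [x [y [xB yB xy]]].
  have key z : z \in A :\: S -> p z = s z.
    rewrite !inE !negb_or => /andP[/and3P[zFd zP zP'] /eqP].
    by rewrite /tri (negbTE zFd) (negbTE zP) (negbTE zP').
  by move/eqP: ps; apply; apply: (AGL_eq pA sA xy); apply: key.
have hS3 : (#|S| <= 3)%N by rewrite cardsE; apply: card_size.
have hAS := cardsID S A.
have hAS' : (#|A :&: S| <= #|S|)%N by apply: subset_leq_card; apply: subsetIr.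
have eS : #|S| = 3%N by lia.
have eAS : #|A :&: S| = #|S| by lia.
have uS : uniq [:: Fd; P; P'] by apply/card_uniqP; rewrite -cardsE eS.
have SA : S \subset A.
  have : A :&: S == S by rewrite eqEcard subsetIr eAS leqnn.
  by move/eqP <-; apply: subsetIl.
move: uS; rewrite /= !inE negb_or => /andP[/andP[FP FP'] /andP[PP' _]].
have PA : P \in A by apply: (subsetP SA); rewrite !inE eqxx orbT.
have P'A : P' \in A by apply: (subsetP SA); rewrite !inE eqxx !orbT.
have PF : P != Fd by rewrite eq_sym.
have P'F : P' != Fd by rewrite eq_sym.
rewrite !inE /tri -/P -/P' in PA P'A.
rewrite (negbTE PF) eqxx (negbTE PP') in PA.
rewrite (negbTE P'F) eqxx (eq_sym P' P) (negbTE PP') in P'A.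
have pF : p Fd != Fd.
  apply: contra FP => /eqP h; apply/eqP; rewrite /P -{2}h permK //.
split => //.
have [a a0 hp] := AGL_rep Fd pA.
have [a' a0' hs] := AGL_rep Fd sA.
rewrite -/P in hp; rewrite -/P' in hs.
set u := P - Fd. set u' := P' - Fd.
have PE : P = u + Fd by rewrite /u subrK.
have P'E : P' = u' + Fd by rewrite /u' subrK.
have u0 : u != 0 by rewrite /u subr_eq0.
have u'0 : u' != 0 by rewrite /u' subr_eq0.
move/eqP: PA; rewrite hp hs => /addIr e1.
move/eqP: P'A; rewrite hp hs => /addIr e2.
have E1 : a * u + a' * (u - u') = 0.
  have : a * u + a' * (u - u') = a' * (P - P') - a * (Fd - P) by rewrite PE P'E; ring.
  by rewrite e1 subrr.
have E2 : a * (u' - u) + a' * u' = 0.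
  have : a * (u' - u) + a' * u' = a * (P' - P) - a' * (Fd - P') by rewrite PE P'E; ring.
  by rewrite e2 subrr.
have k1 : a * a' * (u ^+ 2 - u * u' + u' ^+ 2) = 0.
  have -> : a * a' * (u ^+ 2 - u * u' + u' ^+ 2) =
            (a * u + a' * (u - u')) * (a' * u') + a' * (u' - u) * (a * (u' - u) + a' * u') by ring.
  by rewrite E1 E2 mul0r mulr0 addr0.
have k2 : u ^+ 2 - u * u' + u' ^+ 2 = 0.
  by move/eqP: k1; rewrite !mulf_eq0 (negbTE a0) (negbTE a0') /= => /eqP.
have k3 : (u - r * u') * (u' - r * u) = 0.
  have -> : (u - r * u') * (u' - r * u) = - r * (u ^+ 2 - u * u' + u' ^+ 2) + u * u' * (r ^+ 2 - r + 1) by ring.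
  by rewrite k2 hr !mulr0 addr0.
move/eqP: k3; rewrite mulf_eq0 !subr_eq0 => /orP[/eqP e|/eqP e].
  left.
  have ha' : a' = a * r ^+ 2.
    have : u' * (a * (1 - r) + a') = 0 by rewrite -E2 e; ring.
    move/eqP; rewrite mulf_eq0 (negbTE u'0) /= addrC addr_eq0 => /eqP ->.
    by rewrite r2; ring.
  apply: (fchar (a := a) (u := u')) => x; first by rewrite hp PE e.
  by rewrite hs P'E ha'.
right.
have ha : a = a' * r ^+ 2.
  have : u * (a' * (1 - r) + a) = 0 by rewrite -E1 e; ring.
  move/eqP; rewrite mulf_eq0 (negbTE u0) /= addrC addr_eq0 => /eqP ->.
  by rewrite r2; ring.
apply: (fchar (a := a') (u := u)) => x; first by rewrite hs P'E e.
by rewrite hp PE ha.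
Qed.


Lemma Mlem (x y : {perm F}) : x \in AGL F -> x Fd != Fd ->
  cadj Fd x y = (y == f x) || (x == f y).
Proof.
move=> xA xF; apply/idP/idP.
  by case/D1 => _ [->|->]; rewrite eqxx ?orbT.
case/orP=> /eqP e; first by rewrite e; apply: D2.
have yE : y = iter 5 f x by rewrite e -iterSr iterf_n // r6.
rewrite cadj_sym e; apply: D2; first by rewrite yE; apply: iterf_AGL.
by apply: contra xF => /eqP h; rewrite e fE dilFd h dilFd.
Qed.

Lemma Ilem (x y : {perm F}) : x Fd = Fd -> cadj Fd x y = false.
Proof. by move=> h; apply/negP => /D1 []; rewrite h eqxx. Qed.

Lemma cycle_comp (n : nat) (p : {perm F}) : (0 < n)%N -> r ^+ n = 1 ->
  (forall k, (0 < k < n)%N -> r ^+ k != 1) ->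
  p \in AGL F -> p Fd != Fd -> is_cycle_graph (cadj Fd) (component Fd p) n.
Proof.
move=> n0 rn rk pA pF.
set orb := traject f p n.
have lp : looping f p n.
  rewrite /looping iterf_n //; rewrite /orb.
  by case: (n) n0 => // n' _; rewrite /= inE eqxx.
move/loopingP: lp => inorb.
have step x z : x \in orb -> cadj Fd x z -> z \in orb.
  move/trajectP=> [k _ ->] /D1 [_ [->|e]]; first by rewrite -iterS inorb.
  have -> : z = iter 5 f (f z) by rewrite -iterSr iterf_n // r6.
  by rewrite -e -iterD inorb.
have compE : component Fd p = [set x in orb].
  apply/setP => y; rewrite !inE; apply/idP/idP.
    move/connectP => [pth Hp ->].
    have gen : forall x pth, x \in orb -> path (cadj Fd) x pth -> last x pth \in orb.
      move=> x pth'; elim: pth' x => [|z pth' IH] x //= xo /andP[xz pz].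
      exact: IH (step x z xo xz) pz.
    exact: gen (inorb 0) Hp.
  move/trajectP => [k _ ->]; elim: k => [|k IH]; first exact: connect0.
  apply: connect_trans IH _; apply: connect1; rewrite iterS; apply: D2.
    exact: iterf_AGL.
  exact: iterf_nfix.
have uorb : uniq orb.
  apply/(uniqP p) => i j; rewrite !inE /orb size_traject => ilt jlt.
  rewrite !nth_traject // => e.
  have := congr1 (fun z : {perm F} => z Fd) e; rewrite /= !iterf_Fd /dil => /addIr.
  have w0 : p Fd - Fd != 0 by rewrite subr_eq0.
  move/(mulIf w0) => eij.
  have gen a b : (a < b < n)%N -> r ^+ a = r ^+ b -> False.
    move=> /andP[ab bn] hab.
    have : r ^+ a * r ^+ (b - a) = r ^+ a * 1 by rewrite -exprD (subnKC (ltnW ab)) mulr1 hab.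
    move/(mulfI (expf_neq0 a r0)) => /eqP; apply/negP; apply: rk.
    rewrite subn_gt0 ab /=; apply: leq_ltn_trans bn; exact: leq_subr.
  case: (ltngtP i j) => // h.
    by case: (gen i j); rewrite ?h ?jlt.
  by case: (gen j i); rewrite ?h ?ilt.
have cyc : fcycle f orb.
  rewrite /orb; case: (n) rn n0 => [//|n'] rn' _.
  rewrite trajectS /=.
  have e : iter n' f (f p) = p by rewrite -iterSr iterf_n.
  have -> : rcons (traject f (f p) n') p = traject f (f p) n'.+1 by rewrite trajectSr e.
  exact: fpath_traject.
have nexteq x : x \in orb -> next orb x = f x.
  by move=> xo; apply/esym/eqP; apply: (next_cycle cyc xo).
exists orb; split => //; first exact: size_traject.
move=> x y; rewrite compE !inE => xo yo; rewrite !nexteq //.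
move/trajectP: xo => [k _ ->]; apply: Mlem; [exact: iterf_AGL | exact: iterf_nfix].
Qed.

Lemma iso_iff (p : {perm F}) : p \in AGL F -> (isolated Fd p <-> p Fd = Fd).
Proof.
move=> pA; split.
  move=> /forallP iso; apply/eqP; apply/negPn/negP => pF.
  by move: (iso (f p)); rewrite D2.
by move=> h; apply/forallP => s; rewrite Ilem.
Qed.

Lemma dq_inj (c : F) : injective (fun x => (if c == 0 then 1 else c) * (x - Fd) + Fd).
Proof.
move=> x y; case: eqP => [_|/eqP c0] /addIr.
  by move/(mulfI (oner_neq0 F)) /addIr.
by move/(mulfI c0) /addIr.
Qed.

Definition dq (c : F) : {perm F} := perm (@dq_inj c).

Lemma count_iso : #|[set p in AGL F | isolated Fd p]| = #|F|.-1.
Proof.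
have E : [set p in AGL F | isolated Fd p] = [set dq c | c in [set c : F | c != 0]].
  apply/setP => p; rewrite inE; apply/andP/imsetP.
    move=> [pA /(iso_iff pA) h]; have [a a0 hp] := AGL_rep Fd pA.
    exists a; first by rewrite inE.
    have P : (p^-1)%g Fd = Fd by rewrite -{1}h permK.
    by apply/permP => x; rewrite permE /= (negbTE a0) hp P.
  move=> [c c0 ->]; rewrite inE in c0.
  have dA : dq c \in AGL F.
    apply/AGLP; exists c, (Fd - c * Fd); split => // x.
    by rewrite permE /= (negbTE c0); ring.
  split => //; apply/(iso_iff dA).
  by rewrite permE /= subrr mulr0 add0r.
rewrite E card_in_imset.
  rewrite (_ : [set c : F | c != 0] = [set~ 0]) ?cardsC1 //.
  by apply/setP => c; rewrite !inE.
move=> a b; rewrite !inE => a0 b0 e.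
have := congr1 (fun z : {perm F} => z (1 + Fd)) e.
by rewrite !permE /= (negbTE a0) (negbTE b0) addrK !mulr1 => /addIr.
Qed.

Lemma r2n1 : r ^+ 2 != 1.
Proof.
apply/eqP => h.
have : (r - 1) * (r + 1) = 0.
  have -> : (r - 1) * (r + 1) = r ^+ 2 - 1 by ring.
  by rewrite h subrr.
move/eqP; rewrite mulf_eq0 subr_eq0 (negbTE r_ne1) /=.
exact/negP.
Qed.

Lemma odd_orders : (1 + 1 : F) != 0 -> forall k, (0 < k < 6)%N -> r ^+ k != 1.
Proof.
move=> two [//|[|[|[|[|[|//]]]]]] _.
- by rewrite expr1 r_ne1.
- exact: r2n1.
- rewrite r3; apply: contra two => /eqP h.
  have -> : (1 + 1 : F) = 1 - (-1) by ring.
  by rewrite h subrr.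
- have -> : r ^+ 4 = - r by rewrite (_ : r ^+ 4 = r ^+ 3 * r); [rewrite r3 mulN1r | ring].
  by apply: contra hr1 => /eqP h; rewrite -h addrN.
- have -> : r ^+ 5 = - r ^+ 2 by rewrite (_ : r ^+ 5 = r ^+ 3 * r ^+ 2); [rewrite r3 mulN1r | ring].
  apply: contra r0 => /eqP h.
  have h' : r ^+ 2 = -1 by rewrite -h opprK.
  have -> : r = r ^+ 2 + 1 by rewrite r2; ring.
  by rewrite h' addNr.
Qed.

Lemma even_orders : (1 + 1 : F) = 0 -> r ^+ 3 = 1 /\ forall k, (0 < k < 3)%N -> r ^+ k != 1.
Proof.
move=> two; split.
  by rewrite r3; apply/eqP; rewrite eq_sym -addr_eq0 two.
move=> [//|[|[|//]]] _.
- by rewrite expr1 r_ne1.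
- exact: r2n1.
Qed.

End Root.

Section Facts.
Variable F : finFieldType.
Local Open Scope ring_scope.

Lemma exists_root : (#|F| %% 3 = 1)%N ->
  exists r : F, r ^+ 2 - r + 1 = 0 /\ r + 1 != 0.
Proof.
move=> h3.
have d3 : (3 %| #|[set: {unit F}]%G|)%N.
  rewrite card_finField_unit; have h1 : (1 < #|F|)%N := finNzRing_gt1 F.
  apply/dvdnP; exists (#|F| %/ 3)%N; lia.
have [w _ ow] := Cauchy (isT : prime 3) d3.
set om : F := val w.
have om3 : om ^+ 3 = 1.
  by rewrite /om -FinRing.val_unitX -ow expg_order.
have om1 : om != 1.
  apply/eqP => h; have : w = 1%g by apply: val_inj; rewrite -/om h.
  by move=> w1; move: ow; rewrite w1 order1.
have q0 : om ^+ 2 + om + 1 = 0.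
  have : (om - 1) * (om ^+ 2 + om + 1) = 0.
    have -> : (om - 1) * (om ^+ 2 + om + 1) = om ^+ 3 - 1 by ring.
    by rewrite om3 subrr.
  by move/eqP; rewrite mulf_eq0 subr_eq0 (negbTE om1) => /eqP.
exists (- om); split.
  by rewrite -q0; ring.
by apply: contra om1; rewrite addrC subr_eq0 eq_sym.
Qed.

Lemma q_ge4 : (#|F| %% 3 = 1)%N -> (4 <= #|F|)%N.
Proof. have h : (1 < #|F|)%N := finNzRing_gt1 F. lia. Qed.

Lemma odd_two : odd #|F| -> (1 + 1 : F) != 0.
Proof.
move=> oq; apply/eqP => h.
pose o : F := 1.
have e2 : (o ^+ 2)%g == 1%g by rewrite expgS expg1; apply/eqP; exact: h.
have d2 : (#[o]%g %| 2)%N by rewrite order_dvdn.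
have dq : (#[o]%g %| #|[set: F]%G|)%N by apply: order_dvdG; rewrite inE.
have o0 := order_gt0 o.
have le2 := dvdn_leq (isT : (0 < 2)%N) d2.
have h0 : (o == 0) = false by rewrite /o oner_eq0.
have := order_eq1 o.
move: o0 dq le2; case: (#[o]%g) => [//|[|[|//]]] _.
  move=> _ _; rewrite eqxx => /esym /eqP h1.
  by move: h0; rewrite h1 => /negbT /eqP; apply.
by rewrite cardsT dvdn2 oq.
Qed.

Lemma even_two : ~~ odd #|F| -> (1 + 1 : F) = 0.
Proof.
move=> eq.
have d2 : (2 %| #|[set: F]%G|)%N by rewrite cardsT dvdn2.
have [x _ ox] := Cauchy (isT : prime 2) d2.
have x2 : (x ^+ 2)%g = 1%g by rewrite -ox expg_order.
have x0 : x != 0.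
  apply/eqP => h; move: ox; rewrite h.
  by rewrite (_ : (0 : F) = 1%g) // order1.
move: x2; rewrite expgS expg1 => /eqP.
rewrite (_ : (x * x)%g = x * (1 + 1)); last by rewrite /= mulrDr mulr1.
by rewrite (_ : 1%g = 0 :> F) // mulf_eq0 (negbTE x0) => /eqP.
Qed.

End Facts.

Unset Implicit Arguments.

Theorem theorem6 (F : finFieldType) (Fd : F) :
  #|F| %% 3 = 1 ->
  [/\ (forall p, p \in AGL F -> (isolated Fd p <-> fun_of_perm p Fd = Fd)),
      #|[set p in AGL F | isolated Fd p]| = #|F| - 1,
      (odd #|F| -> forall p, p \in AGL F -> ~~ isolated Fd p ->
          is_cycle_graph (cadj Fd) (component Fd p) 6) &
      (~~ odd #|F| -> forall p, p \in AGL F -> ~~ isolated Fd p ->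
          is_cycle_graph (cadj Fd) (component Fd p) 3)].
Proof.
move=> h3.
have [r [hr hr1]] := exists_root h3.
have hq4 := q_ge4 h3.
have nfix p : p \in AGL F -> ~~ isolated Fd p -> p Fd != Fd.
  by move=> pA; apply: contra => /eqP h; apply/(iso_iff Fd hr hr1 hq4 pA).
split.
- by move=> p pA; apply: (iso_iff Fd hr hr1 hq4 pA).
- by rewrite (count_iso Fd hr hr1 hq4) subn1.
- move=> oq p pA ni.
  apply: (cycle_comp (Fd := Fd) hr hr1 hq4) => //; [exact: r6 | exact: (odd_orders hr hr1 (odd_two oq)) | exact: nfix].
- move=> ev p pA ni.

  have [o3 ok] := even_orders hr hr1 (even_two ev).
  by apply: (cycle_comp (Fd := Fd) hr hr1 hq4) => //; apply: nfix.
Qed.
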